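(* Let $d$ be a metric on $\mathbb R^n$ induced by a norm, $\delta>0$. Let $\{\mathcal D^n(\delta);\tilde w_1,\dots,\tilde w_N;p_1,\dots,p_N\}$ be a DIFS in which each $\tilde w_i$ is the $\delta$-roundoff of a contraction $w_i$ on $(\mathbb R^n,d)$ with contractivity factor $\lambda_i$, and let $\lambda_{max}=\max_i\lambda_i$. Let $\{\mathbb R^n;w_1,\dots,w_N;q_1,\dots,q_N\}$ be an IFS with constant probabilities $q_i\in(0,1]$, $\sum_iq_i=1$. Let $\tilde x_0\in\mathcal D^n(\delta)$, and let $X=\{X_k\}$ with $X_0=\tilde x_0$ and $\tilde X=\{\tilde X_k\}$ with $\tilde X_0=\tilde x_0$ be the Markov chains generated by the IFS and the DIFS respectively (at each step a map index is chosen according to $(q_i)$, resp. $(p_i(\tilde X_{k-1}))$, and the chosen map is applied). Then for any orbit $\{x_k=w_{i_k}(x_{k-1})\}$ of $X$ (respectively any orbit $\{\tilde x_k=\tilde w_{i_k}(\tilde x_{k-1})\}$ of $\tilde X$) there exists an orbit $\{\tilde x_k=\tilde w_{i_k}(\tilde x_{k-1})\}$ of $\tilde X$ (respectively an orbit $\{x_k=w_{i_k}(x_{k-1})\}$ of $X$), with the same index sequence $(i_k)$ and $x_0=\tilde x_0$, such that for all $k\in\mathbb N$, $$d(x_k,\tilde x_k)\le\theta(1-\lambda_{max})^{-1}.$$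
   Context: For $m\in\mathbb Z^n$, $C_\delta(m)=\prod_{j=1}^n[(m_j-\tfrac12)\delta,(m_j+\tfrac12)\delta)$; $\mathcal D^n(\delta)=\{\delta m:m\in\mathbb Z^n\}\subset\mathbb R^n$. The $\delta$-roundoff of $x\in\mathbb R^n$ is $\tilde x=\delta m$ where $x\in C_\delta(m)$; the $\delta$-roundoff of $w$ is $\tilde w(\tilde x)=\widetilde{w(\tilde x)}$ on $\mathcal D^n(\delta)$. $\theta:=\tfrac12\operatorname{diam}_d(C_\delta(0))$. A DIFS $\{S;\tilde w_1,\dots,\tilde w_N;p_1,\dots,p_N\}$ consists of $S\subset\mathcal D^n(\delta)$, maps $\tilde w_i:S\to S$ and functions $p_i:S\to(0,1]$ with $\sum_ip_i(\tilde x)=1$ for every $\tilde x$. *)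

(* Defs.v *)
From HB Require Import structures.
From mathcomp Require Import all_boot all_order all_algebra.
From mathcomp Require Import all_classical all_reals.
Set Implicit Arguments. Unset Strict Implicit. Unset Printing Implicit Defensive.
Import Order.TTheory GRing.Theory Num.Theory.
Local Open Scope ring_scope.
Local Open Scope classical_set_scope.

Definition is_norm (R : realType) (n : nat) (nrm : 'rV[R]_n -> R) : Prop :=
  [/\ forall x, nrm x = 0 -> x = 0,
      forall (a : R) x, nrm (a *: x) = `|a| * nrm x
    & forall x y, nrm (x + y) <= nrm x + nrm y].

Definition dist (R : realType) (n : nat) (nrm : 'rV[R]_n -> R) (x y : 'rV[R]_n) : R :=
  nrm (x - y).

Definition cell (R : realType) (n : nat) (delta : R) (m : 'rV[int]_n) : set 'rV[R]_n :=
  [set x | forall j, (m ord0 j)%:~R * delta - delta / 2 <= x ord0 j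
                     /\ x ord0 j < (m ord0 j)%:~R * delta + delta / 2].

Definition grid (R : realType) (n : nat) (delta : R) : set 'rV[R]_n :=
  [set x | exists m : 'rV[int]_n, x = delta *: map_mx (fun z : int => z%:~R) m].

(* delta-roundoff: x~ = delta m where x in C_delta(m); the index m is
   m_j = floor (x_j / delta + 1/2), which is the unique m with x in C_delta(m). *)
Definition roundoff (R : realType) (n : nat) (delta : R) (x : 'rV[R]_n) : 'rV[R]_n :=
  delta *: \row_j ((Num.floor (x ord0 j / delta + 2^-1))%:~R : R).

Definition theta (R : realType) (n : nat) (nrm : 'rV[R]_n -> R) (delta : R) : R :=
  2^-1 * sup [set r : R | exists x y, [/\ cell delta 0 x, cell delta 0 y & r = dist nrm x y]].

Definition contraction (R : realType) (n : nat) (nrm : 'rV[R]_n -> R)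
    (w : 'rV[R]_n -> 'rV[R]_n) (lam : R) : Prop :=
  0 <= lam /\ lam < 1 /\ forall x y, dist nrm (w x) (w y) <= lam * dist nrm x y.

(* An orbit of the Markov chain generated by the IFS {R^n; w_i; q_i} started at x0,
   along the index sequence i (i k is the index chosen at step k >= 1; i 0 unused):
   every chosen index has positive probability. *)
Definition IFS_orbit (R : realType) (n N : nat) (w : 'I_N -> 'rV[R]_n -> 'rV[R]_n)
    (q : 'I_N -> R) (x0 : 'rV[R]_n) (i : nat -> 'I_N) (x : nat -> 'rV[R]_n) : Prop :=
  x 0%N = x0 /\ forall k, 0 < q (i k.+1) /\ x k.+1 = w (i k.+1) (x k).

Definition DIFS_orbit (R : realType) (n N : nat) (wt : 'I_N -> 'rV[R]_n -> 'rV[R]_n)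
    (p : 'I_N -> 'rV[R]_n -> R) (x0 : 'rV[R]_n) (i : nat -> 'I_N)
    (x : nat -> 'rV[R]_n) : Prop :=
  x 0%N = x0 /\ forall k, 0 < p (i k.+1) (x k) /\ x k.+1 = wt (i k.+1) (x k).

(* Main.v *)
Require Import Defs.
From HB Require Import structures.
From mathcomp Require Import all_boot all_order all_algebra.
From mathcomp Require Import all_classical all_reals.
From mathcomp Require Import ring lra.
Import Order.TTheory GRing.Theory Num.Theory.
Local Open Scope ring_scope.
Local Open Scope classical_set_scope.

Lemma cell_aux (R : realType) (delta y t : R) : 0 < delta -> -1 <= t -> t < 1 ->
  -(delta/2) <= - t * (y - delta * (Num.floor (y/delta + 2^-1))%:~R) /\
  - t * (y - delta * (Num.floor (y/delta + 2^-1))%:~R) < delta/2.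
Proof.
move=> Hd t0 t1.
have e : y = (y / delta) * delta by rewrite mulfVK // gt_eqF.
move: (y / delta) e => u ->.
have h1 := floor_le (u + 2^-1).
have h2 := floorD1_gt (u + 2^-1).
move: (Num.floor (u + 2^-1)) h1 h2 => f h1 h2.
rewrite intrD (_ : 1%:~R = 1 :> R) // in h2.
have i2 : (2:R)^-1 = 1/2 by rewrite div1r.
rewrite i2 in h1 h2.
move: (f%:~R : R) h1 h2 => F h1 h2.
have hz1 : (F - 1/2) * delta <= u * delta by apply: ler_wpM2r; lra.
have hz2 : u * delta < (F + 1/2) * delta by rewrite ltr_pM2r //; lra.
have a1 : - (delta/2) <= u * delta - delta * F by lra.
have a2 : u * delta - delta * F < delta/2 by lra.
move: (u * delta - delta * F) a1 a2 => a a1 a2.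
split.
- have : 0 <= (1 - t) * (a + delta/2) by apply: mulr_ge0; lra.
  have : 0 <= (1 + t) * (delta/2 - a) by apply: mulr_ge0; lra.
  nra.
- have : 0 <= (1 + t) * (delta/2 + a) by apply: mulr_ge0; lra.
  have : 0 < (1 - t) * (delta/2 - a) by apply: mulr_gt0; lra.
  nra.
Qed.

Section Aux.
Variables (R : realType) (n : nat) (nrm : 'rV[R]_n -> R).
Hypothesis Hn : is_norm nrm.

Lemma nrm0 : nrm 0 = 0.
Proof. case: Hn => _ H _. by rewrite -(scale0r (0 : 'rV[R]_n)) H normr0 mul0r. Qed.

Lemma nrm_ge0 x : 0 <= nrm x.
Proof.
case: Hn => _ H1 H2.
have := H2 x (-x); rewrite subrr nrm0 -scaleN1r H1 normrN normr1 mul1r.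
lra.
Qed.

Lemma nrm_sum (m : nat) (F : 'I_m -> 'rV[R]_n) :
  nrm (\sum_(j < m) F j) <= \sum_(j < m) nrm (F j).
Proof.
case: Hn => _ _ H2.
elim/big_rec2: _; first by rewrite nrm0.
move=> j y1 y2 _ Hy; apply: le_trans (H2 _ _) _; exact: lerD.
Qed.

Variable delta : R.
Hypothesis Hd : 0 < delta.

Lemma cell_bounded : has_ubound [set r : R | exists x y,
    [/\ cell delta 0 x, cell delta 0 y & r = dist nrm x y]].
Proof.
case: Hn => _ H1 _.
exists (delta * \sum_(j < n) nrm 'e_j) => r [x [y [Cx Cy ->]]].
rewrite /dist (row_sum_delta (x - y)).
have H := @nrm_sum n (fun j => (x - y) 0 j *: 'e_j). apply: (le_trans H).
rewrite mulr_sumr; apply: ler_sum => j _.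
rewrite H1; apply: ler_wpM2r; first exact: nrm_ge0.
have e0 : (0 : 'I_1) = ord0 by apply: val_inj.
have := Cx j; have := Cy j; rewrite !mxE e0 (_ : (0:int)%:~R = 0 :> R) // !mul0r.
move=> [? ?] [? ?]; rewrite ler_norml; apply/andP; split; lra.
Qed.

Lemma round_err y : nrm (y - roundoff delta y) <= theta nrm delta.
Proof.
case: Hn => _ H1 _.
set z := y - roundoff delta y.
have Cz : forall t, -1 <= t -> t < 1 -> cell delta 0 (- t *: z).
  move=> t Ht1 Ht2 j; rewrite /z /roundoff !mxE (_ : (0:int)%:~R = 0 :> R) // !mul0r.
  rewrite sub0r add0r; exact: cell_aux.
rewrite /theta; set S := sup _.
have HS : forall t, 0 <= t -> t < 1 -> (1 + t) * nrm z <= S.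
  move=> t Ht1 Ht2; apply: (ub_le_sup cell_bounded).
  exists (- (-1) *: z), (- t *: z); split.
  - apply: Cz; lra.
  - apply: Cz; lra.
  - rewrite /dist -scalerBl H1; congr (_ * _).
    rewrite ger0_norm; last lra. ring.
have z0 := nrm_ge0 z.
have S0 := HS 0 ltac:(lra) ltac:(lra).
rewrite leNgt; apply/negP => Hlt.
have Hz : 0 < nrm z by nra.
have := HS (S / (2 * nrm z)).
have t0 : 0 <= S / (2 * nrm z) by apply: divr_ge0; nra.
have t1 : S / (2 * nrm z) < 1 by rewrite ltr_pdivrMr; nra.
move/(_ t0 t1).
rewrite mulrDl mul1r.
have -> : S / (2 * nrm z) * nrm z = S / 2 by field; rewrite gt_eqF.
lra.
Qed.

Lemma theta_ge0 : 0 <= theta nrm delta.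
Proof. exact: le_trans (nrm_ge0 _) (round_err 0). Qed.

End Aux.
Fixpoint orb {T : Type} (f : nat -> T -> T) (x0 : T) (k : nat) : T :=
  match k with 0%N => x0 | k'.+1 => f k' (orb f x0 k') end.

Lemma roundoff_grid (R : realType) (n : nat) (delta : R) (y : 'rV[R]_n) : grid delta (roundoff delta y).
Proof.
exists (\row_j Num.floor (y ord0 j / delta + 2^-1)).
rewrite /roundoff; congr (_ *: _); apply/rowP => j; rewrite !mxE.
by [].
Qed.

Theorem lemma6 (R : realType) (n N : nat) (nrm : 'rV[R]_n -> R) (delta : R)
    (w : 'I_N -> 'rV[R]_n -> 'rV[R]_n) (lam : 'I_N -> R)
    (p : 'I_N -> 'rV[R]_n -> R) (q : 'I_N -> R) (x0 : 'rV[R]_n) :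
  is_norm nrm -> 0 < delta ->
  (forall k, contraction nrm (w k) (lam k)) ->
  (* the DIFS on D^n(delta): probabilities p_i : D^n(delta) -> (0,1], summing to 1 *)
  (forall k x, grid delta x -> 0 < p k x <= 1) ->
  (forall x, grid delta x -> \sum_k p k x = 1) ->
  (* the IFS: constant probabilities q_i in (0,1], summing to 1 *)
  (forall k, 0 < q k <= 1) -> \sum_k q k = 1 ->
  grid delta x0 ->
  let wt := fun k x => roundoff delta (w k x) in
  let lammax := \big[Num.max/0]_k lam k in
  (forall (i : nat -> 'I_N) (x : nat -> 'rV[R]_n), IFS_orbit w q x0 i x ->
     exists xt : nat -> 'rV[R]_n, DIFS_orbit wt p x0 i xt /\
       forall k, dist nrm (x k) (xt k) <= theta nrm delta / (1 - lammax))
  /\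
  (forall (i : nat -> 'I_N) (xt : nat -> 'rV[R]_n), DIFS_orbit wt p x0 i xt ->
     exists x : nat -> 'rV[R]_n, IFS_orbit w q x0 i x /\
       forall k, dist nrm (x k) (xt k) <= theta nrm delta / (1 - lammax)).
Proof.
move=> Hn Hd Hc Hp Hps Hq Hqs Hx0 wt lammax.
have L01 : (0 <= lammax) && (lammax < 1).
  rewrite /lammax; apply: (big_ind (fun v => (0 <= v) && (v < 1))).
  - by rewrite lexx ltr01.
  - move=> a b /andP [a0 a1] /andP [b0 b1].
    by rewrite le_max a0 gt_max a1 b1.
  - move=> k _; have [h0 [h1 _]] := Hc k; by rewrite h0 h1.
move/andP: L01 => [L0 L1].
have Llam : forall k, lam k <= lammax.
  by move=> k; rewrite /lammax (bigD1 k) //= le_max lexx.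
have th0 := @theta_ge0 R n nrm Hn delta Hd.
set E := theta nrm delta / (1 - lammax).
have hE : E * (1 - lammax) = theta nrm delta.
  rewrite /E; field; rewrite subr_eq0; apply/eqP => h; rewrite h in L1; lra.
have E0 : 0 <= E by rewrite /E; apply: divr_ge0 => //; lra.
have key : forall (i : nat -> 'I_N) (x xt : nat -> 'rV[R]_n), x 0%N = x0 -> xt 0%N = x0 ->
    (forall k, x k.+1 = w (i k.+1) (x k)) -> (forall k, xt k.+1 = wt (i k.+1) (xt k)) ->
    forall k, dist nrm (x k) (xt k) <= E.
  move=> i x xt h0 h0' hx hxt; elim=> [|k IH].
    by rewrite h0 h0' /dist subrr (@nrm0 R n nrm Hn).
  rewrite hx hxt /wt /dist.
  set a := w (i k.+1) (x k); set b := w (i k.+1) (xt k).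
  have e : a - roundoff delta b = (a - b) + (b - roundoff delta b) by rewrite addrA subrK.
  case: (Hn) => _ _ Htri.
  rewrite e; apply: le_trans (Htri _ _) _.
  have hr := @round_err R n nrm Hn delta Hd b.
  have [l0 [_ hc]] := Hc (i k.+1).
  have hab := hc (x k) (xt k); rewrite /dist in hab IH.
  have hl := Llam (i k.+1).
  have D0 := @nrm_ge0 R n nrm Hn (x k - xt k).
  move: (nrm (x k - xt k)) D0 IH hab => D D0 IH hab.
  move: (lam (i k.+1)) l0 hl hab => l l0 hl hab.
  have : l * D <= lammax * E.
    apply: le_trans (ler_wpM2l l0 IH) _; exact: ler_wpM2r.
  nra.
have grid_orb : forall (i : nat -> 'I_N) k, grid delta (orb (fun k y => wt (i k.+1) y) x0 k).
  by move=> i [|k] //=; apply: roundoff_grid.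
split.
- move=> i x [hx0 hx].
  exists (orb (fun k y => wt (i k.+1) y) x0); split.
    split => // k; split => //.
    by have /andP [] := Hp (i k.+1) _ (grid_orb i k).
  apply: (key i) => // k; by case: (hx k).
- move=> i xt [hx0 hxt].
  exists (orb (fun k y => w (i k.+1) y) x0); split.
    split => // k; split => //.
    by have /andP [] := Hq (i k.+1).
  apply: (key i) => // k; by case: (hxt k).
Qed.
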